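(* Let $p>5$ be a prime, $q=p^h$, and let $\mathcal{F}$ be the projective closure of $ax^ny^m+bx^n+cy^m=1$ over $\mathbb{F}_q$, where $a,b,c\in\mathbb{F}_q^*$, $c\ne-\frac ab$, and $m,n$ are positive integers with $p\nmid mn$, $n\ge m$, $\min\{m,n\}>2$. If $p\mid(n+1)$ and $p\mid(m-1)$, then $\mathcal{F}$ is $\mathbb{F}_q$-Frobenius classical with respect to conics.
   Context: With $\varphi_0,\dots,\varphi_5$ the monomials of degree 2 in $x,y,1$, $\tau$ separating and $D^{(k)}_\tau$ Hasse derivatives, the $\mathbb{F}_q$-Frobenius order sequence w.r.t. conics is the lexicographically smallest $\nu_0<\dots<\nu_4$ such that the $6\times6$ determinant with first row $(\varphi_j^q)_j$ and rows $(D^{(\nu_i)}_\tau\varphi_j)_j$ is nonzero; the curve is $\mathbb{F}_q$-Frobenius classical w.r.t. conics if $\nu_i=i$ for all $i$. *)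

(* Defs.v *)
From HB Require Import structures.
From mathcomp Require Import all_boot all_order all_algebra.
Set Implicit Arguments. Unset Strict Implicit. Unset Printing Implicit Defensive.
Import Order.TTheory GRing.Theory Num.Theory.
Local Open Scope ring_scope.

Definition transcendental (F : fieldType) (K : fieldType)
  (iota : {rmorphism F -> K}) (x : K) : Prop :=
  forall P : {poly F}, P != 0 -> (map_poly iota P).[x] != 0.

Definition hasse_deriv (F : fieldType) (K : fieldType)
  (iota : {rmorphism F -> K}) (x : K) (D : nat -> K -> K) : Prop :=
  (forall u, D 0%N u = u) /\
  (forall k u v, D k (u + v) = D k u + D k v) /\
  (forall k u v, D k (u * v) = \sum_(i < k.+1) D i u * D (k - i)%N v) /\
  (forall k c, (0 < k)%N -> D k (iota c) = 0) /\
  (forall i j u, D i (D j u) = 'C(i + j, i)%:R * D (i + j)%N u) /\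
  D 1%N x = 1 /\
  (forall k, (1 < k)%N -> D k x = 0).

Definition conic_monomials (K : fieldType) (x y : K) (j : 'I_6) : K :=
  nth 0 [:: 1; x; y; x ^+ 2; x * y; y ^+ 2] j.

(* The 6x6 matrix: first row (phi_j^q)_j, row i+1 = (D^(nu_i) phi_j)_j. *)
Definition frob_matrix (K : fieldType) (q : nat) (D : nat -> K -> K)
  (x y : K) (nu : 'I_5 -> nat) : 'M[K]_6 :=
  \matrix_(i < 6, j < 6)
    match unlift ord0 i with
    | None => conic_monomials x y j ^+ q
    | Some i' => D (nu i') (conic_monomials x y j)
    end.

Definition strictly_increasing (nu : 'I_5 -> nat) : Prop :=
  forall i j : 'I_5, (i < j)%N -> (nu i < nu j)%N.

Definition lex_le (nu mu : 'I_5 -> nat) : Prop :=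
  (forall i, nu i = mu i) \/
  exists i : 'I_5, (forall j : 'I_5, (j < i)%N -> nu j = mu j) /\ (nu i < mu i)%N.

Definition frob_order_seq_conics (K : fieldType) (q : nat) (D : nat -> K -> K)
  (x y : K) (nu : 'I_5 -> nat) : Prop :=
  [/\ strictly_increasing nu,
      \det (frob_matrix q D x y nu) != 0 &
      forall mu, strictly_increasing mu -> \det (frob_matrix q D x y mu) != 0 ->
        lex_le nu mu ].

Definition frob_classical_conics (K : fieldType) (q : nat) (D : nat -> K -> K)
  (x y : K) : Prop :=
  exists nu, frob_order_seq_conics q D x y nu /\ forall i : 'I_5, nu i = i :> nat.

(* Main.v *)
Require Import Defs.
From HB Require Import structures.
From mathcomp Require Import all_boot all_order all_algebra ring zify.
From mathcomp Require Import finfield.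
Import Order.TTheory GRing.Theory Num.Theory.
Local Open Scope ring_scope.

Lemma lc1 (R : fieldType) (k a b c d : R) : a = b -> c - d = k * (a - b) -> c = d.
Proof. by move=> ->; rewrite subrr mulr0 => /eqP; rewrite subr_eq0 => /eqP. Qed.

Section H.
Variables (F K : fieldType) (iota : {rmorphism F -> K}) (x : K) (D : nat -> K -> K).
Hypothesis HD : hasse_deriv iota x D.

Lemma hD0 u : D 0 u = u. Proof. case: HD => [h0 [hadd [hmul [hc [hcomp [hx1 hxk]]]]]]; exact: h0. Qed.
Lemma hDadd k u v : D k (u + v) = D k u + D k v. Proof. case: HD => [h0 [hadd [hmul [hc [hcomp [hx1 hxk]]]]]]; exact: hadd. Qed.
Lemma hDmul k u v : D k (u * v) = \sum_(i < k.+1) D i u * D (k - i)%N v.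
Proof. case: HD => [h0 [hadd [hmul [hc [hcomp [hx1 hxk]]]]]]; exact: hmul. Qed.
Lemma hDc k c : (0 < k)%N -> D k (iota c) = 0. Proof. case: HD => [h0 [hadd [hmul [hc [hcomp [hx1 hxk]]]]]]; exact: hc. Qed.
Lemma hDcomp i j u : D i (D j u) = 'C(i + j, i)%:R * D (i + j)%N u.
Proof. case: HD => [h0 [hadd [hmul [hc [hcomp [hx1 hxk]]]]]]; exact: hcomp. Qed.
Lemma hDx1 : D 1 x = 1. Proof. case: HD => [h0 [hadd [hmul [hc [hcomp [hx1 hxk]]]]]]; exact: hx1. Qed.
Lemma hDxk k : (1 < k)%N -> D k x = 0. Proof. case: HD => [h0 [hadd [hmul [hc [hcomp [hx1 hxk]]]]]]; exact: hxk. Qed.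
Lemma hD1 k : (0 < k)%N -> D k 1 = 0. Proof. by move=> k0; rewrite -(rmorph1 iota) hDc. Qed.
Lemma hDzero k : D k 0 = 0.
Proof. have h := hDadd k 0 0; rewrite addr0 in h; by apply: (addrI (D k 0)); rewrite -h addr0. Qed.
Lemma hDopp k u : D k (- u) = - D k u.
Proof. by apply/eqP; rewrite -subr_eq0 opprK -hDadd addNr hDzero. Qed.
Lemma hDsub k u v : D k (u - v) = D k u - D k v.
Proof. by rewrite hDadd hDopp. Qed.
Lemma hdM u v : D 1 (u * v) = u * D 1 v + D 1 u * v.
Proof. rewrite hDmul big_ord_recr big_ord1 /= !hD0 addrC. done. Qed.
Lemma hdC c u : D 1 (iota c * u) = iota c * D 1 u.
Proof. by rewrite hdM hDc // mul0r addr0. Qed.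
Lemma hdX u j : D 1 (u ^+ j) = j%:R * u ^+ j.-1 * D 1 u.
Proof.
elim: j => [|j IH]; first by rewrite expr0 hD1 // mulr0n !mul0r.
rewrite exprS hdM IH /=; case: j {IH} => [|j] /=; first by rewrite !expr0; ring.
rewrite exprS; ring.
Qed.
Lemma hstep k u : D 1 (D k u) = k.+1%:R * D k.+1 u.
Proof. by rewrite hDcomp add1n bin1. Qed.

Lemma step_rel (y E g : K) k : D 1 E = g -> D 1 g = 0 -> (k.+2)%:R != 0 :> K ->
  D k.+1 y * E = - g * D k y -> D k.+2 y * E = - g * D k.+1 y.
Proof.
move=> hE hg nz h; have := congr1 (D 1) h.
rewrite !hdM hE hDopp hg !hstep => h2.
apply: (mulfI nz); apply: (@lc1 K 1 _ _ _ _ h2); ring.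
Qed.

Lemma base_rel (y E g : K) : D 1 E = g -> D 1 g = 0 -> 2%:R != 0 :> K ->
  D 1 y * E + y * g = 1 -> D 2 y * E = - g * D 1 y.
Proof.
move=> hE hg nz h; have := congr1 (D 1) h.
rewrite hDadd !hdM hE hg hD1 // !hstep => h2.
apply: (mulfI nz); apply: (@lc1 K 1 _ _ _ _ h2); ring.
Qed.

Lemma hDxmul k u : D k.+1 (x * u) = x * D k.+1 u + D k u.
Proof.
rewrite hDmul !big_ord_recl /= hD0 hDx1 mul1r subn1 /=.
rewrite big1 ?addr0 // => i _; rewrite hDxk ?mul0r //.
Qed.

Lemma hDsq k u : D k (u * u) = \sum_(i < k.+1) D i u * D (k - i)%N u.
Proof. exact: hDmul. Qed.

Lemma hDsq1 u : D 1 (u * u) = u * D 1 u + D 1 u * u.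
Proof. by rewrite hdM. Qed.
Lemma hDsq2 u : D 2 (u * u) = u * D 2 u + D 1 u * D 1 u + D 2 u * u.
Proof. rewrite hDmul !big_ord_recl big_ord0 /= !hD0 addr0 addrA. done. Qed.
Lemma hDsq3 u : D 3 (u * u) = u * D 3 u + D 1 u * D 2 u + D 2 u * D 1 u + D 3 u * u.
Proof. rewrite hDmul !big_ord_recl big_ord0 /= !hD0 addr0 !addrA. done. Qed.
Lemma hDsq4 u : D 4 (u * u) = u * D 4 u + D 1 u * D 3 u + D 2 u * D 2 u + D 3 u * D 1 u + D 4 u * u.
Proof. rewrite hDmul !big_ord_recl big_ord0 /= !hD0 addr0 !addrA. done. Qed.

Lemma frob_eqs q (v : 'rV[K]_6) (y : K) :
  v *m frob_matrix q D x y (fun i : 'I_5 => (i : nat)) = 0 ->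
  forall j : 'I_6, v 0 ord0 * conic_monomials x y j ^+ q +
     \sum_(i < 5) v 0 (lift ord0 i) * D i (conic_monomials x y j) = 0.
Proof.
move=> h j; have := congr1 (fun M : 'M[K]_(1,6) => M 0 j) h; rewrite !mxE big_ord_recl !mxE unlift_none.
by under eq_bigr => i _ do rewrite mxE liftK.
Qed.
End H.
Lemma poly_contra (F : fieldType) (a b c : F) (n m q : nat) :
  a != 0 -> b != 0 -> c != 0 -> a + b * c != 0 -> (0 < n)%N -> (2 < m)%N -> (m <= n)%N -> (5 < q)%N ->
  (1 - b%:P * 'X^n) ^+ (q + m.-1) * (c%:P * 'X^q + a%:P * 'X^(n.+1)) ^+ m !=
  ('X^q - b%:P * 'X^(n.+1)) ^+ m * (a%:P * 'X^n + c%:P) ^+ (q + m.-1).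
Proof.
move=> a0 b0 c0 e0 n0 m0 mn q7.
set PN := 1 - _; set PM := _ + c%:P; set PT := _ + _ * 'X^(n.+1); set PS := _ - _.
set k := (q + m.-1)%N.
apply/eqP => heq.
have sbX : size (b%:P * 'X^n) = n.+1 by rewrite size_Cmul // size_polyXn.
have sPN : size PN = n.+1.
  by rewrite /PN addrC size_polyDl size_polyN sbX // size_poly1.
have PN0 : PN != 0 by rewrite -size_poly_eq0 sPN.
have cop : coprimep PN PM.
  apply/Bezout_eq1_coprimepP; exists ((a / (a + b * c))%:P, (b / (a + b * c))%:P) => /=.
  rewrite /PN /PM.
  have -> : (a / (a + b * c))%:P * (1 - b%:P * 'X^n) + (b / (a + b * c))%:P * (a%:P * 'X^n + c%:P)
     = (a / (a + b * c) + b / (a + b * c) * c)%:P + (b / (a + b * c) * a - a / (a + b * c) * b)%:P * 'X^n.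
    rewrite !(rmorphD, rmorphM, rmorphB) /=; ring.
  have -> : b / (a + b * c) * a - a / (a + b * c) * b = 0 by field.
  have -> : a / (a + b * c) + b / (a + b * c) * c = 1 by field.
  by rewrite mul0r addr0.
have dv : PN ^+ k %| PS ^+ m.
  rewrite -(@Gauss_dvdpl _ _ (PM ^+ k)); last by apply: coprimep_expl; apply: coprimep_expr.
  by rewrite -heq dvdp_mulIl.
have [PS0|PSn0] := eqVneq (PS ^+ m) 0.
  move: heq; rewrite PS0 mul0r => /eqP; rewrite mulf_eq0 !expf_eq0 (negPf PN0) andbF /= => /andP [_ PT0].
  move/eqP: PS0; rewrite expf_eq0 => /andP [_ PS0].
  have : c%:P * PS - PT = - ((a + b * c)%:P * 'X^(n.+1)).
    rewrite /PS /PT !(rmorphD, rmorphM, rmorphB) /=; ring.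
  rewrite (eqP PS0) (eqP PT0) mulr0 subrr => /eqP; rewrite eq_sym oppr_eq0 mulf_eq0 polyC_eq0 (negPf e0) /=.
  by rewrite expf_eq0 polyX_eq0 andbF.
have := dvdp_leq PSn0 dv.
have h1 := size_exp PN k; have h2 := size_exp PS m.
have h3 : (size PS <= maxn q.+1 n.+2)%N.
  apply: leq_trans (size_polyD _ _) _; rewrite size_polyN size_Cmul // !size_polyXn //.
have pos1 : (0 < size (PN ^+ k))%N by rewrite size_poly_gt0 expf_neq0.
have pos2 : (0 < size (PS ^+ m))%N by rewrite size_poly_gt0.
rewrite sPN /= in h1.
have h4 : ((size PS).-1 <= maxn q n.+1)%N by move: h3; rewrite maxnSS; case: (size PS) => //=.
move=> hle.
have h5 : (n * k <= (size PS).-1 * m)%N.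
  move: h1 h2 hle pos1 pos2; set s1 := size _; set s2 := size (PS ^+ m); set t1 := (n * k)%N; set t2 := ((size PS).-1 * m)%N; lia.
have h6 : ((size PS).-1 * m <= maxn q n.+1 * m)%N by rewrite leq_mul2r h4 orbT.
rewrite /k in h5.
case: (leqP q n.+1) => hq.
  move: h6; rewrite (maxn_idPr hq) => h6. nia.
move: h6; rewrite (maxn_idPl (ltnW hq)) => h6.
have : (n * (q + m.-1) <= m * q)%N by lia.
have : (m * q <= n * q)%N by rewrite leq_mul2r mn orbT.
have : (0 < n * m.-1)%N by rewrite muln_gt0; lia.
rewrite mulnDr; lia.
Qed.

Lemma lc2 (R : fieldType) (k1 k2 a1 b1 a2 b2 c d : R) :
  a1 = b1 -> a2 = b2 -> c - d = k1 * (a1 - b1) + k2 * (a2 - b2) -> c = d.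
Proof.
move=> -> ->; rewrite !subrr !mulr0 addr0 => /eqP; rewrite subr_eq0 => /eqP. done.
Qed.
Lemma lc3 (R : fieldType) (k1 k2 k3 a1 b1 a2 b2 a3 b3 c d : R) :
  a1 = b1 -> a2 = b2 -> a3 = b3 ->
  c - d = k1 * (a1 - b1) + k2 * (a2 - b2) + k3 * (a3 - b3) -> c = d.
Proof.
move=> -> -> ->; rewrite !subrr !mulr0 !addr0 => /eqP; rewrite subr_eq0 => /eqP. done.
Qed.

Theorem proposition4p11 (p h : nat) (F : finFieldType) (a b c : F) (m n : nat) :
  prime p -> (5 < p)%N -> (0 < h)%N -> #|F| = (p ^ h)%N ->
  a != 0 -> b != 0 -> c != 0 -> c != - (a / b) ->
  (0 < m)%N -> (0 < n)%N -> ~~ (p %| m * n)%N -> (m <= n)%N -> (2 < minn m n)%N ->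
  (p %| n.+1)%N -> (p %| m.-1)%N ->
  forall (K : fieldType) (iota : {rmorphism F -> K}) (x y : K),
    transcendental iota x ->
    iota a * x ^+ n * y ^+ m + iota b * x ^+ n + iota c * y ^+ m = 1 ->
    forall D : nat -> K -> K, hasse_deriv iota x D ->
      frob_classical_conics (p ^ h)%N D x y.
Proof.
move=> pr p5 h0 hcard a0 b0 c0 cab m0 n0 pmn mn mn2 pn pm K iota x y tr hcur D HD.
have hD0 := hD0 _ _ _ _ _ HD.
have hDadd := hDadd _ _ _ _ _ HD.
have hDmul := hDmul _ _ _ _ _ HD.
have hDc := hDc _ _ _ _ _ HD.
have hDcomp := hDcomp _ _ _ _ _ HD.
have hDx1 := hDx1 _ _ _ _ _ HD.
have hDxk := hDxk _ _ _ _ _ HD.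
have hD1 := hD1 _ _ _ _ _ HD.
have hDzero := hDzero _ _ _ _ _ HD.
have hDopp := hDopp _ _ _ _ _ HD.
have hDsub := hDsub _ _ _ _ _ HD.
have hdM := hdM _ _ _ _ _ HD.
have hdC := hdC _ _ _ _ _ HD.
have hdX := hdX _ _ _ _ _ HD.
have hstep := hstep _ _ _ _ _ HD.
have step_rel := step_rel _ _ _ _ _ HD.
have base_rel := base_rel _ _ _ _ _ HD.
have hDxmul := hDxmul _ _ _ _ _ HD.
have hDsq1 := hDsq1 _ _ _ _ _ HD.
have hDsq2 := hDsq2 _ _ _ _ _ HD.
have hDsq3 := hDsq3 _ _ _ _ _ HD.
have hDsq4 := hDsq4 _ _ _ _ _ HD.
have m2 : (2 < m)%N by move: mn2; rewrite leq_min => /andP[].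
set q := (p ^ h)%N.
have q7 : (5 < q)%N.
  have p6 := p5; rewrite /q; apply: (leq_trans p6); rewrite -{1}(expn1 p) leq_pexp2l // prime_gt0 //.
have pF : p \in [pchar F] := card_finPcharP hcard pr.
have pK : p \in [pchar K] := rmorph_pchar iota pF.
have nz : forall k, (0 < k)%N -> (k < p)%N -> k%:R != 0 :> K.
  by move=> k k0 kp; rewrite -(dvdn_pcharf pK) gtnNdvd.
have nA : (n.+1)%:R = 0 :> K by apply/eqP; rewrite -(dvdn_pcharf pK).
have nB : (m.-1)%:R = 0 :> K by apply/eqP; rewrite -(dvdn_pcharf pK).
have e0 : a + b * c != 0.
  apply: contraNneq cab => h1; apply/eqP; apply: (@lc1 F (b^-1) _ _ _ _ h1); field.
  done.
have ia0 : iota a != 0 by rewrite fmorph_eq0.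
have ib0 : iota b != 0 by rewrite fmorph_eq0.
have ic0 : iota c != 0 by rewrite fmorph_eq0.
have x0 : x != 0.
  by have := tr 'X (negbT (@polyX_eq0 F)); rewrite map_polyX hornerX.
have xn0 : x ^+ n != 0 by rewrite expf_neq0.
have y0 : y != 0.
  apply/eqP => y0; move: hcur; rewrite y0 expr0n (gtn_eqF m0) !mulr0 addr0 add0r => hb.
  have P0 : (b%:P * 'X^n - 1 : {poly F}) != 0.
    apply/eqP => /(congr1 (horner^~ 0)); rewrite !hornerE expr0n (gtn_eqF n0) mulr0 sub0r.
    by move/eqP; rewrite oppr_eq0 oner_eq0.
  have := tr _ P0; rewrite rmorphB rmorphM /= map_polyC map_polyXn rmorph1 !hornerE hb subrr.
  by rewrite eqxx.
have yn0 : y ^+ m != 0 by rewrite expf_neq0.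
set A := x ^+ n.+1; set B := y ^+ m.-1.
have B0 : B != 0 by rewrite expf_neq0.
have hA : A = x * x ^+ n by rewrite /A exprS.
have hym : y ^+ m = y * B by rewrite /B -exprS prednK.
have dA : D 1 A = 0 by rewrite hdX // nA !mul0r.
have dB : D 1 B = 0 by rewrite hdX // nB !mul0r.
set g := iota c * B.
set E := g * x + iota a * A * B.
have g0 : g != 0 by rewrite mulf_neq0.
have dE : D 1 E = g.
  by rewrite /E /g hDadd !hdM !hDc // dA dB hDx1; ring.
have dg : D 1 g = 0 by rewrite /g hdM hDc // dB; ring.
have hyE : y * E = x - iota b * A.
  rewrite hym in hcur; apply: (@lc1 K x _ _ _ _ hcur); rewrite /E /g hA; ring.
set s := D 1 y.
have hs : s * E + y * g = 1.
  have := congr1 (D 1) hyE; rewrite hdM hDsub hDx1 hdC dA dE mulr0 subr0 => h1.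
  by rewrite -h1 addrC.
have E0 : E != 0.
  have -> : E = B * (iota c * x + iota a * A) by rewrite /E /g; ring.
  rewrite mulf_neq0 //.
  have P0 : (c%:P * 'X + a%:P * 'X^(n.+1) : {poly F}) != 0.
    have -> : (c%:P * 'X + a%:P * 'X^(n.+1) : {poly F}) = 'X * (c%:P + a%:P * 'X^n).
      by rewrite exprS; ring.
    rewrite mulf_neq0 ?polyX_eq0 //.
    apply/eqP => /(congr1 (horner^~ 0)); rewrite !hornerE expr0n (gtn_eqF n0) mulr0 addr0.
    by move/eqP; rewrite (negPf c0).
  by have := tr _ P0; rewrite rmorphD !rmorphM /= !map_polyC map_polyX map_polyXn !hornerE.
have s0 : s != 0.
  apply/eqP => s0; move: hs; rewrite s0 mul0r add0r => h1.
  have h1' : iota c * y ^+ m = 1 by rewrite hym -h1 /g; ring.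
  have h2 : x ^+ n * (iota a * y ^+ m + iota b) = 0.
    apply: (@lc2 K 1 (-1) _ _ _ _ _ _ hcur h1'); ring.
  move/eqP: h2; rewrite mulf_eq0 (negPf xn0) /= => /eqP h3.
  have : iota (a + b * c) = 0.
    rewrite rmorphD rmorphM /=; apply: (@lc2 K (- iota a) (iota c) _ _ _ _ _ _ h1' h3); ring.
  by move/eqP; rewrite fmorph_eq0 (negPf e0).
have n2K : 2%:R != 0 :> K by apply: nz => //; apply: leq_trans p5.
have n3K : 3%:R != 0 :> K by apply: nz => //; apply: leq_trans p5.
have n4K : 4%:R != 0 :> K by apply: nz => //; apply: leq_trans p5.
have y2E := base_rel y E g dE dg n2K hs.
have y3E := step_rel y E g 1 dE dg n3K y2E.
have y4E := step_rel y E g 2 dE dg n4K y3E.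
have [r rE] : exists r, r * E = - g by exists (- g / E); rewrite divfK.
have r0 : r != 0 by apply: contra_neq g0 => r0; move: rE; rewrite r0 mul0r => /eqP; rewrite eq_sym oppr_eq0 => /eqP.
have y2 : D 2 y = r * s by apply: (mulIf E0); rewrite y2E mulrAC rE.
have y3 : D 3 y = r * (r * s) by apply: (mulIf E0); rewrite y3E y2 mulrAC rE.
have y4 : D 4 y = r * (r * (r * s)) by apply: (mulIf E0); rewrite y4E y3 mulrAC rE.
set X := x ^+ q; set Y := y ^+ q.
set u := X - x.
set H := (Y - y - s * u) * (1 - r * u) - r * s * u ^+ 2.
have QH : E * H = Y * (g * X + iota a * A * B) - (X - iota b * A).
  apply: (@lc3 K (-(Y - y - s * u) * u - s * u ^+ 2) (-1) (- u) _ _ _ _ _ _ _ _ rE hyE hs).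
  rewrite /H /E /u; ring.
have H0 : H != 0.
  apply/eqP => H0; move: QH; rewrite H0 mulr0 => /esym /eqP; rewrite subr_eq0 => /eqP hQ.
  have hyT : y ^+ (q + m.-1) * (iota c * X + iota a * A) = X - iota b * A.
    by rewrite -hQ exprD /Y /g /B; ring.
  have hN : y ^+ m * (iota a * x ^+ n + iota c) = 1 - iota b * x ^+ n.
    by apply: (@lc1 K 1 _ _ _ _ hcur); rewrite hym; ring.
  have key : (1 - iota b * x ^+ n) ^+ (q + m.-1) * (iota c * X + iota a * A) ^+ m =
             (X - iota b * A) ^+ m * (iota a * x ^+ n + iota c) ^+ (q + m.-1).
    rewrite -hN -hyT !exprMn -!exprM [(m * _)%N]mulnC; ring.
  have := poly_contra _ _ _ _ _ _ _ a0 b0 c0 e0 n0 m2 mn q7; rewrite -(@subr_eq0 {poly F}) => /(tr _).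
  move/eqP: key; rewrite -subr_eq0 => /eqP key.
  rewrite !(rmorphB, rmorphD, rmorphM, rmorphXn, rmorph1) /= !map_polyC ?map_polyXn ?map_polyX !hornerE.
  by rewrite -/A -/X key eqxx.
exists (fun i : 'I_5 => (i : nat)); split; last by [].
split.
- by [].
- apply/det0P => -[v vnz hv].
  have EQ := frob_eqs _ _ _ _ _ _ hv.
  have e_0 := EQ (@Ordinal 6 0 isT); have e_1 := EQ (@Ordinal 6 1 isT).
  have e_2 := EQ (@Ordinal 6 2 isT); have e_3 := EQ (@Ordinal 6 3 isT).
  have e_4 := EQ (@Ordinal 6 4 isT); have e_5 := EQ (@Ordinal 6 5 isT).
  rewrite /conic_monomials /= !big_ord_recl !big_ord0 /bump /= !expr2 in e_0 e_1 e_2 e_3 e_4 e_5.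
  rewrite ?hDxmul ?hDsq1 ?hDsq2 ?hDsq3 ?hDsq4 !hD0 ?hDx1 ?hDxk ?hD1 // in e_0 e_1 e_2 e_3 e_4 e_5.
  rewrite -/s y2 y3 y4 expr1n !exprMn -/X -/Y in e_0 e_1 e_2 e_3 e_4 e_5.
  set w0 := v 0 ord0 in e_0 e_1 e_2 e_3 e_4 e_5.
  set w1 := v 0 (lift ord0 ord0) in e_0 e_1 e_2 e_3 e_4 e_5.
  set w2 := v 0 (lift ord0 (lift ord0 ord0)) in e_0 e_1 e_2 e_3 e_4 e_5.
  set w3 := v 0 (lift ord0 (lift ord0 (lift ord0 ord0))) in e_0 e_1 e_2 e_3 e_4 e_5.
  set w4 := v 0 (lift ord0 (lift ord0 (lift ord0 (lift ord0 ord0)))) in e_0 e_1 e_2 e_3 e_4 e_5.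
  set w5 := v 0 (lift ord0 (lift ord0 (lift ord0 (lift ord0 (lift ord0 ord0))))) in e_0 e_1 e_2 e_3 e_4 e_5.
  have f1 : w1 = - w0 by apply: (@lc1 K 1 _ _ _ _ e_0); ring.
  have f2 : w2 = - w0 * u by apply: (@lc2 K 1 (- x) _ _ _ _ _ _ e_1 e_0); rewrite /u; ring.
  have f3 : w3 = - w0 * u ^+ 2.
    by apply: (@lc3 K 1 (-(2%:R * x)) (x ^+ 2) _ _ _ _ _ _ _ _ e_3 e_1 e_0); rewrite /u; ring.
  rewrite f1 f2 f3 in e_2 e_4 e_5.
  have hw0H : w0 * H = 0.
    by apply: (@lc2 K (1 + r * x) (- r) _ _ _ _ _ _ e_2 e_4); rewrite /H /u; ring.
  have hw0 : w0 = 0 by move/eqP: hw0H; rewrite mulf_eq0 (negPf H0) orbF => /eqP.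
  rewrite hw0 in e_2 e_4 e_5 f1 f2 f3.
  have h45 : r * s * (w4 + r * w5) = 0.
    by apply: (@lc2 K 1 (- x) _ _ _ _ _ _ e_4 e_2); ring.
  have hw4 : w4 = - r * w5.
    move/eqP: h45; rewrite mulf_eq0 mulf_eq0 (negPf r0) (negPf s0) /= addr_eq0 => /eqP ->.
    by rewrite mulNr.
  rewrite hw4 in e_2 e_5.
  have h5 : (r * s) ^+ 2 * w5 = 0.
    by apply: (@lc2 K 1 (- (2%:R * y)) _ _ _ _ _ _ e_5 e_2); ring.
  have hw5 : w5 = 0.
    by move/eqP: h5; rewrite mulf_eq0 expf_eq0 /= mulf_eq0 (negPf r0) (negPf s0) /= => /eqP.
  rewrite hw5 mulr0 in hw4.
  move/eqP: vnz; apply; apply/rowP => j; rewrite mxE.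
  case: j => -[|[|[|[|[|[|j]]]]]] Hj; try by [].
  + have -> : Ordinal Hj = ord0 by apply: val_inj.
    by rewrite -/w0 hw0.
  + have -> : Ordinal Hj = lift ord0 ord0 by apply: val_inj.
    by rewrite -/w1 f1 oppr0.
  + have -> : Ordinal Hj = lift ord0 (lift ord0 ord0) by apply: val_inj.
    by rewrite -/w2 f2 oppr0 mul0r.
  + have -> : Ordinal Hj = lift ord0 (lift ord0 (lift ord0 ord0)) by apply: val_inj.
    by rewrite -/w3 f3 oppr0 mul0r.
  + have -> : Ordinal Hj = lift ord0 (lift ord0 (lift ord0 (lift ord0 ord0))) by apply: val_inj.
    by rewrite -/w4 hw4.
  + have -> : Ordinal Hj = lift ord0 (lift ord0 (lift ord0 (lift ord0 (lift ord0 ord0)))) by apply: val_inj.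
    by rewrite -/w5 hw5.
- move=> mu smu _.
  have ge : forall k (hk : (k < 5)%N), (k <= mu (Ordinal hk))%N.
    elim=> [|k IH] hk //.
    have hk' : (k < 5)%N by apply: ltnW.
    have := smu (Ordinal hk') (Ordinal hk) (ltnSn k).
    by have := IH hk'; apply: leq_ltn_trans.
  case: (boolP [forall i : 'I_5, mu i == i]) => [/forallP allv | /forallPn ex].
    by left => i; rewrite (eqP (allv i)).
  have ex' : exists k, (k < 5)%N && (mu (inord k) != k).
    by case: ex => i hi; exists i; rewrite ltn_ord inord_val.
  case: (ex_minnP ex') => k /andP [k5 hk] kmin.
  right; exists (Ordinal k5); split.
    move=> j hj; apply/eqP; apply: contraTT hj => hne; rewrite -leqNgt.
    by apply: kmin; rewrite ltn_ord inord_val eq_sym.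
  have e : inord k = Ordinal k5 by apply: val_inj; rewrite /= inordK.
  rewrite e in hk; rewrite /= ltn_neqAle eq_sym hk /=.
  exact: ge.
Qed.
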